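(* Let $q$ be a prime power, $2\le n\le m$, let $C\subseteq\mathbb{F}_{q^m}^n$ be a vector rank-metric code, and let $\Gamma$ be a basis of $\mathbb{F}_{q^m}$ over $\mathbb{F}_q$ with dual basis $\Gamma^*$. Then $P(\Gamma(C^{\perp\!\!\perp}),\mathrm c)=P(\Gamma^*(C),\mathrm c)^*=P(\Gamma(C),\mathrm c)^*$ and $P(\Gamma(C^{\perp\!\!\perp}),\mathrm r)=P(\Gamma^*(C),\mathrm r)^*\sim P(\Gamma(C),\mathrm r)^*$.
   Context: A vector rank-metric code is an $\mathbb{F}_{q^m}$-linear subspace $C\subseteq\mathbb{F}_{q^m}^n$; its dual is $C^{\perp\!\!\perp}=\{v\in\mathbb{F}_{q^m}^n\mid\langle v,w\rangle=0\ \forall w\in C\}$ for the standard inner product of $\mathbb{F}_{q^m}^n$. For an $\mathbb{F}_q$-basis $\Gamma=\{\gamma_1,\dots,\gamma_m\}$ of $\mathbb{F}_{q^m}$, the dual basis $\Gamma^*=\{\gamma_1^*,\dots,\gamma_m^*\}$ is the one with $\mathrm{Tr}_{\mathbb{F}_{q^m}/\mathbb{F}_q}(\gamma_i\gamma_j^* )=\delta_{ij}$. For $v\in\mathbb{F}_{q^m}^n$, $\Gamma(v)$ is the unique $n\times m$ matrix over $\mathbb{F}_q$ with $v_i=\sum_j\Gamma(v)_{ij}\gamma_j$, and $\Gamma(C)=\{\Gamma(v)\mid v\in C\}$. For an $\mathbb{F}_q$-subspace $\mathcal{C}$ of $n\times m$ matrices and subspaces $J\subseteq\mathbb{F}_q^n$,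 $K\subseteq\mathbb{F}_q^m$: $\mathcal{C}(J,\mathrm c)=\{M\in\mathcal{C}\mid\mathrm{colsp}(M)\subseteq J\}$, $\mathcal{C}(K,\mathrm r)=\{M\in\mathcal{C}\mid\mathrm{rowsp}(M)\subseteq K\}$, $\rho_{\mathrm c}(\mathcal{C},J)=(\dim\mathcal{C}-\dim\mathcal{C}(J^\perp,\mathrm c))/m$, $\rho_{\mathrm r}(\mathcal{C},K)=(\dim\mathcal{C}-\dim\mathcal{C}(K^\perp,\mathrm r))/n$ ($\perp$ for the standard inner product); $P(\mathcal{C},\mathrm c)=(\mathbb{F}_q^n,\rho_{\mathrm c}(\mathcal{C},\cdot))$, $P(\mathcal{C},\mathrm r)=(\mathbb{F}_q^m,\rho_{\mathrm r}(\mathcal{C},\cdot))$. The dual of a $q$-polymatroid $P=(\mathbb{F}_q^N,\rho)$ is $P^*=(\mathbb{F}_q^N,\rho^* )$ with $\rho^*(A)=\dim(A)-\rho(\mathbb{F}_q^N)+\rho(A^\perp)$. Two pairs $(\mathbb{F}_q^N,\rho_1)$, $(\mathbb{F}_q^N,\rho_2)$ are equivalent ($\sim$) if there is an $\mathbb{F}_q$-linear isomorphism $\varphi$ of $\mathbb{F}_q^N$ with $\rho_1(A)=\rho_2(\varphi(A))$ for all subspaces $A$. *)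

(* Defs.v *)
From HB Require Import structures.
From mathcomp Require Import all_boot all_order all_algebra all_field.
From mathcomp Require Import boolp.
Set Implicit Arguments. Unset Strict Implicit. Unset Printing Implicit Defensive.
Import Order.TTheory GRing.Theory Num.Theory.
Local Open Scope ring_scope.

Section RankMetric.
Variables (F : finFieldType) (L : fieldExtType F).

Definition fTr (x : L) : F :=
  \tr (passmx.mxof (vbasis {:L}) (vbasis {:L}) (amull x)).

Definition is_dual_basis m (gam gams : m.-tuple L) : Prop :=
  forall i j : 'I_m, fTr (tnth gam i * tnth gams j) = (i == j)%:R.

Definition GammaV m n (gam : m.-tuple L) (v : 'rV[L]_n) : 'M[F]_(n, m) :=
  \matrix_(i < n, j < m) coord gam j (v 0 i).

(* Gamma(S) = {Gamma(v) | v in S}, as an F-subspace (the F-span of this set,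
   which is the set itself when S is an F-subspace) *)
Definition GammaCode m n (gam : m.-tuple L) (S : 'rV[L]_n -> Prop)
  : {vspace 'M[F]_(n, m)} :=
  << [seq M <- enum 'M[F]_(n, m) | `[< exists2 v, S v & GammaV gam v = M >] ] >>%VS.

Definition ipL n (v w : 'rV[L]_n) : L := \sum_(i < n) v 0 i * w 0 i.
Definition dualCode n (C : {vspace 'rV[L]_n}) : 'rV[L]_n -> Prop :=
  fun v => forall w, w \in C -> ipL v w = 0.
End RankMetric.

(* Subspaces of F^N are represented by square matrices A : 'M[F]_N through their
   row space (mxalgebra); A^perp (standard inner product) is kermx A^T. *)
Definition perpS (F : fieldType) N (A : 'M[F]_N) : 'M[F]_N := kermx A^T.

Section MatrixCodes.
Variables (F : finFieldType) (n m : nat).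
Implicit Type Cm : {vspace 'M[F]_(n, m)}.

Definition subcode_c Cm (J : 'M[F]_n) : {vspace 'M[F]_(n, m)} :=
  << [seq M <- enum 'M[F]_(n, m) | (M \in Cm) && (M^T <= J)%MS] >>%VS.
Definition subcode_r Cm (K : 'M[F]_m) : {vspace 'M[F]_(n, m)} :=
  << [seq M <- enum 'M[F]_(n, m) | (M \in Cm) && (M <= K)%MS] >>%VS.

Definition rho_c Cm (J : 'M[F]_n) : rat :=
  ((\dim Cm)%:R - (\dim (subcode_c Cm (perpS J)))%:R) / m%:R.
Definition rho_r Cm (K : 'M[F]_m) : rat :=
  ((\dim Cm)%:R - (\dim (subcode_r Cm (perpS K)))%:R) / n%:R.
End MatrixCodes.

(* P(C,c) = (F^n, rho_c C) and P(C,r) = (F^m, rho_r C) *)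
Definition Pc (F : finFieldType) n m (Cm : {vspace 'M[F]_(n, m)}) := rho_c Cm.
Definition Pr (F : finFieldType) n m (Cm : {vspace 'M[F]_(n, m)}) := rho_r Cm.

Definition qpm_dual (F : fieldType) N (rho : 'M[F]_N -> rat) : 'M[F]_N -> rat :=
  fun A => (\rank A)%:R - rho 1%:M + rho (perpS A).

Definition qpm_eq (F : fieldType) N (rho1 rho2 : 'M[F]_N -> rat) : Prop :=
  forall A : 'M[F]_N, rho1 A = rho2 A.

Definition qpm_equiv (F : fieldType) N (rho1 rho2 : 'M[F]_N -> rat) : Prop :=
  exists P : 'M[F]_N, P \in unitmx /\ forall A : 'M[F]_N, rho1 A = rho2 (A *m P).

(* Main.v *)
Require Import Defs.
From HB Require Import structures.
From mathcomp Require Import all_boot all_order all_algebra all_field.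
From mathcomp Require Import boolp.
From mathcomp Require Import zify ring.
Set Implicit Arguments. Unset Strict Implicit. Unset Printing Implicit Defensive.
Import Order.TTheory GRing.Theory Num.Theory.
Local Open Scope ring_scope.

Section Mat.
Variables (F : finFieldType) (n m : nat).
Local Notation MT := 'M[F]_(n, m).

Lemma span_filterE (P : pred MT) : P 0 ->
  (forall c x y, P x -> P y -> P (c *: x + y)) ->
  forall x, (x \in <<[seq M <- enum MT | P M]>>%VS) = P x.
Proof.
move=> P0 Pc x; apply/idP/idP; last first.
  by move=> Px; apply: memv_span; rewrite mem_filter Px mem_enum.
set X := [seq M <- enum MT | P M].
have -> : X = in_tuple X by [].
move/coord_span => ->.
apply: (big_ind P) => //.
  by move=> a b Pa Pb; rewrite -[a]scale1r; apply: Pc.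
move=> i _; rewrite -[_ *: _]addr0; apply: Pc => //.
have : X`_i \in X by apply: mem_nth; exact: ltn_ord.
by rewrite mem_filter => /andP[].
Qed.

Definition fm (M N : MT) : F := \tr (M^T *m N).

Lemma fmC M N : fm M N = fm N M.
Proof. by rewrite /fm -mxtrace_tr trmx_mul trmxK. Qed.

Lemma fm_linl c M1 M2 N : fm (c *: M1 + M2) N = c * fm M1 N + fm M2 N.
Proof. by rewrite /fm linearP /= mulmxDl -scalemxAl mxtraceD mxtraceZ. Qed.

Lemma fm_linr c M N1 N2 : fm M (c *: N1 + N2) = c * fm M N1 + fm M N2.
Proof. by rewrite !(fmC M) fm_linl. Qed.

Lemma fm0r M : fm M 0 = 0.
Proof. by rewrite /fm mulmx0 mxtrace0. Qed.

Lemma fm_sumr M I (r : seq I) (P : pred I) (G : I -> MT) :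
  fm M (\sum_(i <- r | P i) G i) = \sum_(i <- r | P i) fm M (G i).
Proof.
apply: (big_morph (fm M)); last exact: fm0r.
by move=> a b; rewrite -[a]scale1r fm_linr mul1r scale1r.
Qed.

Lemma fmE M N : fm M N = \sum_i \sum_j M i j * N i j.
Proof.
rewrite /fm /mxtrace exchange_big; apply: eq_bigr => j _.
by rewrite mxE; apply: eq_bigr => i _; rewrite mxE.
Qed.

Lemma fm_delta M i j : fm M (delta_mx i j) = M i j.
Proof.
rewrite fmE (bigD1 i) //=.
rewrite [X in _ + X]big1 ?addr0; last first.
  by move=> k hk; apply: big1 => l _; rewrite mxE (negbTE hk) mulr0.
rewrite (bigD1 j) //= big1 ?addr0; last first.
  by move=> l hl; rewrite mxE (negbTE hl) andbF mulr0.
by rewrite mxE !eqxx mulr1.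
Qed.

Definition fX (X : {vspace MT}) (M : MT) : 'rV[F]_(\dim X) :=
  \row_i fm M (vbasis X)`_i.

Lemma fX_lin X : linear (fX X).
Proof. by move=> c M1 M2; apply/rowP=> i; rewrite !mxE fm_linl. Qed.
HB.instance Definition _ X := GRing.isLinear.Build F _ _ _ (fX X) (fX_lin X).

Definition perpv (X : {vspace MT}) : {vspace MT} := lker (linfun (fX X)).

Lemma mem_perpv (X : {vspace MT}) M : reflect (forall N, N \in X -> fm M N = 0) (M \in perpv X).
Proof.
rewrite /perpv memv_ker lfunE /=; apply: (iffP eqP).
  move=> h N /coord_vbasis ->; rewrite fm_sumr big1 // => i _.
  move/rowP: h => /(_ i); rewrite !mxE => e.
  by rewrite -[_ *: _]addr0 fm_linr e fm0r mulr0 addr0.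
move=> h; apply/rowP=> i; rewrite !mxE h //; apply: vbasis_mem.
by apply: mem_nth; rewrite size_tuple.
Qed.

Lemma perpv_add (X Y : {vspace MT}) : perpv (X + Y) = (perpv X :&: perpv Y)%VS.
Proof.
apply/vspaceP=> M; rewrite memv_cap; apply/mem_perpv/andP.
  by move=> h; split; apply/mem_perpv => N hN; apply: h;
   [apply: (subvP (addvSl X Y)) | apply: (subvP (addvSr X Y))].
case=> /mem_perpv hX /mem_perpv hY N /memv_addP[x hx [y hy ->]].
by rewrite -[x]scale1r fm_linr hX // hY // mulr0 add0r.
Qed.

Lemma perpv_full : perpv fullv = 0%VS.
Proof.
apply/vspaceP=> M; rewrite memv0; apply/mem_perpv/eqP => [h|-> N _].
  by apply/matrixP=> i j; rewrite -fm_delta h ?memvf // mxE.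
by rewrite /fm trmx0 mul0mx mxtrace0.
Qed.

Lemma dim_perpv_ge (X : {vspace MT}) : (n * m <= \dim (perpv X) + \dim X)%N.
Proof.
have := limg_ker_dim (linfun (fX X)) fullv.
rewrite capfv dimvf /dim /= => e.
have : (\dim (linfun (fX X) @: fullv) <= \dim X)%N.
  apply: leq_trans (dimvS (subvf _)) _; by rewrite dimvf /dim /= mul1n.
by move=> h; rewrite -e leq_add2l.
Qed.

Lemma dim_perpv (X : {vspace MT}) : (\dim (perpv X) + \dim X = n * m)%N.
Proof.
have h1 := dim_perpv_ge X.
have h2 := dim_perpv_ge (X^C)%VS.
have hc := dimv_compl X. rewrite dimvf /dim /= in hc.
have hX : (\dim X <= n * m)%N by have := dimvS (subvf X); rewrite dimvf.
have hcap : (perpv X :&: perpv X^C)%VS = 0%VS by rewrite -perpv_add addv_complf perpv_full.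
have := dimv_sum_cap (perpv X) (perpv X^C); rewrite hcap dimv0 addn0 => hs.
have : (\dim (perpv X + perpv X^C) <= n * m)%N.
  by have := dimvS (subvf (perpv X + perpv X^C)); rewrite dimvf.
lia.
Qed.


Definition Vc (J : 'M[F]_n) : {vspace MT} :=
  <<[seq M <- enum MT | (M^T <= J)%MS]>>%VS.
Definition Vr (K : 'M[F]_m) : {vspace MT} :=
  <<[seq M <- enum MT | (M <= K)%MS]>>%VS.

Lemma mem_Vc J M : (M \in Vc J) = (M^T <= J)%MS.
Proof.
apply: span_filterE; first by rewrite trmx0 sub0mx.
move=> c x y hx hy; rewrite linearP /=.
by rewrite addmx_sub // scalemx_sub.
Qed.

Lemma mem_Vr K M : (M \in Vr K) = (M <= K)%MS.
Proof.
apply: span_filterE; first by rewrite sub0mx.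
by move=> c x y hx hy; rewrite addmx_sub // scalemx_sub.
Qed.

Lemma subcode_cE (X : {vspace MT}) J : subcode_c X J = (X :&: Vc J)%VS.
Proof.
apply/vspaceP=> M; rewrite memv_cap mem_Vc; apply: span_filterE.
  by rewrite mem0v trmx0 sub0mx.
move=> c x y /andP[hx hx'] /andP[hy hy']; rewrite memvD ?memvZ //=.
by rewrite linearP /= addmx_sub // scalemx_sub.
Qed.

Lemma subcode_rE (X : {vspace MT}) K : subcode_r X K = (X :&: Vr K)%VS.
Proof.
apply/vspaceP=> M; rewrite memv_cap mem_Vr; apply: span_filterE.
  by rewrite mem0v sub0mx.
move=> c x y /andP[hx hx'] /andP[hy hy']; rewrite memvD ?memvZ //=.
by rewrite addmx_sub // scalemx_sub.
Qed.

Lemma dim_inj_img (aT rT : vectType F) (f : 'Hom(aT, rT)) (U : {vspace aT}) :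
  lker f = 0%VS -> \dim (f @: U) = \dim U.
Proof. by move=> h; apply: limg_dim_eq; rewrite h capv0. Qed.

Lemma dim_Vc J : \dim (Vc J) = (\rank J * m)%N.
Proof.
set r := \rank J.
pose f := linfun (mulmx (row_base J)^T : 'M[F]_(r, m) -> MT).
have hk : lker f = 0%VS.
  apply/eqP/lker0P => x y; rewrite !lfunE /= => e.
  have : x^T *m row_base J = y^T *m row_base J.
    have h z : z^T *m row_base J = ((row_base J)^T *m z)^T.
      by rewrite trmx_mul trmxK.
    by rewrite !h e.
  by move/(row_free_inj (row_base_free J))/(congr1 trmx); rewrite !trmxK.
have -> : Vc J = (f @: fullv)%VS.
  apply/vspaceP=> M; rewrite mem_Vc; apply/idP/memv_imgP.
    rewrite -(eq_row_base J) => /submxP[W e].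
    exists W^T; rewrite ?memvf // lfunE /=.
    by rewrite -[M]trmxK e trmx_mul.
  case=> W _ ->; rewrite lfunE /= trmx_mul trmxK.
  by rewrite -(eq_row_base J) submxMl.
by rewrite dim_inj_img // dimvf.
Qed.

Lemma dim_Vr K : \dim (Vr K) = (\rank K * n)%N.
Proof.
set r := \rank K.
pose f := linfun (mulmxr (row_base K) : 'M[F]_(n, r) -> MT).
have hk : lker f = 0%VS.
  apply/eqP/lker0P => x y; rewrite !lfunE /= => e.
  exact: (row_free_inj (row_base_free K)) e.
have -> : Vr K = (f @: fullv)%VS.
  apply/vspaceP=> M; rewrite mem_Vr; apply/idP/memv_imgP.
    rewrite -(eq_row_base K) => /submxP[W e].
    by exists W; rewrite ?memvf // lfunE.
  case=> W _ ->; rewrite lfunE /=.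
  by rewrite -(eq_row_base K) submxMl.
by rewrite dim_inj_img // dimvf /dim /= mulnC.
Qed.


Lemma rank_perpS N (J : 'M[F]_N) : \rank (perpS J) = (N - \rank J)%N.
Proof. by rewrite /perpS mxrank_ker mxrank_tr. Qed.

Lemma perpSK N (J : 'M[F]_N) : (perpS (perpS J) :=: J)%MS.
Proof.
have sJ : (J <= perpS (perpS J))%MS.
  by rewrite /perpS sub_kermx -[J in J *m _]trmxK -trmx_mul mulmx_ker trmx0.
apply: eqmx_sym; apply/eqmxP; rewrite -(mxrank_leqif_eq sJ).2.
rewrite !rank_perpS subKn //; exact: rank_leq_col.
Qed.

Lemma Vc_perp J : Vc (perpS J) = perpv (Vc J).
Proof.
apply/eqP; rewrite eqEdim; apply/andP; split.
  apply/subvP=> M; rewrite mem_Vc /perpS sub_kermx => /eqP hM.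
  apply/mem_perpv=> N; rewrite mem_Vc => /submxP[W hW].
  rewrite fmC /fm hW -mulmxA.
  have -> : J *m M = 0 by rewrite -[J *m M]trmxK trmx_mul hM trmx0.
  by rewrite mulmx0 mxtrace0.
have := dim_perpv (Vc J); rewrite !dim_Vc rank_perpS mulnBl.
have := rank_leq_col J; nia.
Qed.

Lemma Vr_perp K : Vr (perpS K) = perpv (Vr K).
Proof.
apply/eqP; rewrite eqEdim; apply/andP; split.
  apply/subvP=> M; rewrite mem_Vr /perpS sub_kermx => /eqP hM.
  apply/mem_perpv=> N; rewrite mem_Vr => /submxP[W hW].
  rewrite /fm hW mxtrace_mulC -mulmxA.
  have -> : K *m M^T = 0 by rewrite -[K *m _]trmxK trmx_mul trmxK hM trmx0.
  by rewrite mulmx0 mxtrace0.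
have := dim_perpv (Vr K); rewrite !dim_Vr rank_perpS mulnBl.
have := rank_leq_col K; nia.
Qed.

Lemma Vc_perpSK J : Vc (perpS (perpS J)) = Vc J.
Proof. by apply/vspaceP=> M; rewrite !mem_Vc; exact: ((perpSK J).2 _ _).2. Qed.

Lemma Vr_perpSK K : Vr (perpS (perpS K)) = Vr K.
Proof. by apply/vspaceP=> M; rewrite !mem_Vr; exact: ((perpSK K).2 _ _).2. Qed.


Lemma natr_eq (a b c : nat) : (a + b)%N = c -> (a%:R : rat) = c%:R - b%:R.
Proof. by move=> <-; rewrite natrD addrK. Qed.

Lemma rho_c_dual (X : {vspace MT}) J : m != 0%N ->
  rho_c (perpv X) J = qpm_dual (rho_c X) J.
Proof.
move=> hm; rewrite /qpm_dual /rho_c !subcode_cE Vc_perp -perpv_add Vc_perpSK.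
have h0 : \dim (X :&: Vc (perpS 1%:M)) = 0%N.
  apply/eqP; rewrite -leqn0; apply: leq_trans (dimvS (capvSr _ _)) _.
  by rewrite dim_Vc rank_perpS mxrank1 subnn.
rewrite h0.
have a := natr_eq (dim_perpv X).
have b := natr_eq (dim_perpv (X + Vc J)).
have c := natr_eq (dimv_sum_cap X (Vc J)).
rewrite dim_Vc in c.
rewrite a b c !natrM.
have hm' : (m%:R : rat) != 0 by rewrite pnatr_eq0.
field; exact: hm'.
Qed.

Lemma rho_r_dual (X : {vspace MT}) K : n != 0%N ->
  rho_r (perpv X) K = qpm_dual (rho_r X) K.
Proof.
move=> hn; rewrite /qpm_dual /rho_r !subcode_rE Vr_perp -perpv_add Vr_perpSK.
have h0 : \dim (X :&: Vr (perpS 1%:M)) = 0%N.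
  apply/eqP; rewrite -leqn0; apply: leq_trans (dimvS (capvSr _ _)) _.
  by rewrite dim_Vr rank_perpS mxrank1 subnn.
rewrite h0.
have a := natr_eq (dim_perpv X).
have b := natr_eq (dim_perpv (X + Vr K)).
have c := natr_eq (dimv_sum_cap X (Vr K)).
rewrite dim_Vr in c.
rewrite a b c !natrM.
have hn' : (n%:R : rat) != 0 by rewrite pnatr_eq0.
field; exact: hn'.
Qed.


Lemma img_cap (f : 'Hom(MT, MT)) (X Y Y' : {vspace MT}) :
  (forall v, (f v \in Y') = (v \in Y)) -> (f @: (X :&: Y) = (f @: X) :&: Y')%VS.
Proof.
move=> hY; apply/vspaceP=> w; apply/memv_imgP/memv_capP.
  case=> v /memv_capP[hx hy] ->; split; first exact: memv_img.
  by rewrite hY.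
case=> /memv_imgP[v hx ->] hy; exists v => //.
by rewrite memv_cap hx -hY.
Qed.

Lemma lker_mulB (B : 'M[F]_m) : B \in unitmx ->
  lker (linfun (mulmxr B : MT -> MT)) = 0%VS.
Proof.
move=> hB; apply/eqP/lker0P => x y; rewrite !lfunE /= => e.
by rewrite -(mulmxK hB x) e mulmxK.
Qed.

Lemma rho_c_mulB (X : {vspace MT}) (B : 'M[F]_m) J : B \in unitmx ->
  rho_c (linfun (mulmxr B : MT -> MT) @: X)%VS J = rho_c X J.
Proof.
move=> hB; rewrite /rho_c !subcode_cE.
rewrite -(img_cap X (Y := Vc (perpS J))); last first.
  move=> v; rewrite lfunE /= !mem_Vc trmx_mul.
  by apply: ((eqmxMfull _ _).2 _ _).1; rewrite row_full_unit unitmx_tr.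
by rewrite !dim_inj_img // lker_mulB.
Qed.

Lemma rho_r1 (X : {vspace MT}) : rho_r X 1%:M = (\dim X)%:R / n%:R.
Proof.
rewrite /rho_r subcode_rE.
have -> : \dim (X :&: Vr (perpS 1%:M)) = 0%N.
  apply/eqP; rewrite -leqn0; apply: leq_trans (dimvS (capvSr _ _)) _.
  by rewrite dim_Vr rank_perpS mxrank1 subnn.
by rewrite subr0.
Qed.

Lemma rho_r_mulB (X : {vspace MT}) (B : 'M[F]_m) A : B \in unitmx ->
  rho_r (linfun (mulmxr B : MT -> MT) @: X)%VS (perpS A) =
  rho_r X (perpS (A *m invmx B)).
Proof.
move=> hB; rewrite /rho_r !subcode_rE !Vr_perpSK.
rewrite -(img_cap X (Y := Vr (A *m invmx B))); last first.
  move=> v; rewrite lfunE /= !mem_Vr; apply/idP/idP => h.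
    by rewrite -(mulmxK hB v); apply: submxMr.
  by rewrite -(mulmxKV hB A); apply: submxMr.
by rewrite !dim_inj_img // lker_mulB.
Qed.

End Mat.


Section Gam.
Variables (F : finFieldType) (L : fieldExtType F) (n m : nat).
Local Notation MT := 'M[F]_(n, m).

Lemma fTr_lin a (x y : L) : fTr (a *: x + y) = a * fTr x + fTr y.
Proof. by rewrite /fTr linearP passmx.mxof_linear mxtraceD mxtraceZ. Qed.


Lemma fTr0 : fTr (0 : L) = 0.
Proof.
have h := fTr_lin 1 (0 : L) 0; rewrite scale1r addr0 mul1r in h.
by apply: (addIr (fTr (0 : L))); rewrite add0r -h.
Qed.

Lemma fTrZ a (x : L) : fTr (a *: x) = a * fTr x.
Proof. by rewrite -[_ *: _]addr0 fTr_lin fTr0 addr0. Qed.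

Lemma fTr_sum I (r : seq I) (P : pred I) (G : I -> L) :
  fTr (\sum_(i <- r | P i) G i) = \sum_(i <- r | P i) fTr (G i).
Proof.
apply: (big_morph (@fTr F L) _ fTr0).
by move=> a b; rewrite -[a]scale1r fTr_lin mul1r scale1r.
Qed.

Lemma Gamma_lin (e : m.-tuple L) c (v w : 'rV[L]_n) :
  GammaV e (c%:A *: v + w) = c *: GammaV e v + GammaV e w.
Proof.
apply/matrixP=> i j; rewrite !mxE mulr_algl.
by rewrite linearP.
Qed.

Lemma Gamma0 (e : m.-tuple L) : GammaV e 0 = 0 :> MT.
Proof. by apply/matrixP=> i j; rewrite !mxE linear0. Qed.

Lemma mem_GammaCode (e : m.-tuple L) (S : 'rV[L]_n -> Prop) : S 0 ->
  (forall c v w, S v -> S w -> S (c%:A *: v + w)) ->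
  forall M : MT, (M \in GammaCode e S) <-> exists2 v, S v & GammaV e v = M.
Proof.
move=> S0 Sc M; rewrite /GammaCode span_filterE.
- by split=> [/asboolP|h]; last apply/asboolP.
- by apply/asboolP; exists 0 => //; rewrite Gamma0.
move=> c x y /asboolP[v Sv <-] /asboolP[w Sw <-]; apply/asboolP.
by exists (c%:A *: v + w); [apply: Sc | rewrite Gamma_lin].
Qed.

End Gam.


Section Bas.
Variables (F : finFieldType) (L : fieldExtType F) (n m : nat).
Variables (gam gams : m.-tuple L).
Hypothesis hgam : basis_of {:L} gam.
Hypothesis hdual : is_dual_basis gam gams.
Local Notation MT := 'M[F]_(n, m).

Lemma dimL : \dim {:L} = m.
Proof. exact: size_basis hgam. Qed.

Lemma hdual' (i j : 'I_m) : fTr (gam`_i * gams`_j) = (i == j :> 'I_m)%:R.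
Proof. by rewrite -!tnth_nth hdual. Qed.

Lemma gams_free : free gams.
Proof.
apply/freeP=> k hk j.
have := congr1 (fun x => fTr (gam`_j * x)) hk; rewrite /= mulr0 fTr0.
rewrite mulr_sumr fTr_sum (bigD1 j) //= big1 ?addr0.
  by rewrite -scalerAr fTrZ hdual' eqxx mulr1.
by move=> i hi; rewrite -scalerAr fTrZ hdual' eq_sym (negbTE hi) mulr0.
Qed.

Lemma hgams : basis_of {:L} gams.
Proof. by rewrite basisEfree gams_free subvf size_tuple dimL /=. Qed.

Lemma expand (e : m.-tuple L) : basis_of {:L} e ->
  forall x, x = \sum_j coord e j x *: e`_j.
Proof. by move=> he x; apply: coord_span; rewrite (span_basis he) memvf. Qed.

Lemma fm_Gamma (v w : 'rV[L]_n) :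
  fm (GammaV gam v) (GammaV gams w) = fTr (ipL v w).
Proof.
rewrite fmE /ipL fTr_sum; apply: eq_bigr => i _.
rewrite [in RHS](expand hgam (v 0 i)) [in RHS](expand hgams (w 0 i)) mulr_suml fTr_sum.
apply: eq_bigr => j _; rewrite !mxE mulr_sumr fTr_sum (bigD1 j) //= big1 ?addr0.
  by rewrite -scalerAl -scalerAr fTrZ fTrZ hdual' eqxx mulr1.
by move=> l hl; rewrite -scalerAl -scalerAr fTrZ fTrZ hdual' eq_sym (negbTE hl) !mulr0.
Qed.

Lemma Gamma_surj (M : MT) : exists v, GammaV gam v = M.
Proof.
exists (\row_i \sum_j M i j *: gam`_j); apply/matrixP=> i j.
by rewrite !mxE coord_sum_free // (basis_free hgam).
Qed.

Definition Bmx : 'M[F]_m := \matrix_(j, l) coord gams l gam`_j.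

Lemma Bmx_unit : Bmx \in unitmx.
Proof.
pose B' : 'M[F]_m := \matrix_(l, j) coord gam j gams`_l.
suff h : Bmx *m B' = 1%:M by case: (mulmx1_unit h).
apply/matrixP=> j j'.
rewrite !mxE.
have -> : \sum_l Bmx j l * B' l j' = coord gam j' (\sum_l coord gams l gam`_j *: gams`_l).
  by rewrite linear_sum; apply: eq_bigr => l _; rewrite linearZ !mxE.
by rewrite -(expand hgams) coord_free // (basis_free hgam).
Qed.

Lemma Gammas_B (v : 'rV[L]_n) : GammaV gams v = GammaV gam v *m Bmx.
Proof.
apply/matrixP=> i l; rewrite !mxE.
rewrite {1}(expand hgam (v 0 i)) linear_sum; apply: eq_bigr => j _.
by rewrite linearZ !mxE.
Qed.

End Bas.


Lemma ipL_linl (F : finFieldType) (L : fieldExtType F) n (a : L) (v1 v2 w : 'rV[L]_n) :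
  ipL (a *: v1 + v2) w = a * ipL v1 w + ipL v2 w.
Proof.
rewrite /ipL mulr_sumr -big_split /=; apply: eq_bigr => i _.
by rewrite !mxE mulrDl mulrA.
Qed.

Lemma ipL_Zr (F : finFieldType) (L : fieldExtType F) n (a : L) (v w : 'rV[L]_n) :
  ipL v (a *: w) = a * ipL v w.
Proof.
rewrite /ipL mulr_sumr; apply: eq_bigr => i _.
by rewrite !mxE mulrCA.
Qed.

Lemma ipL0 (F : finFieldType) (L : fieldExtType F) n (w : 'rV[L]_n) : ipL 0 w = 0.
Proof. by rewrite /ipL big1 // => i _; rewrite mxE mul0r. Qed.

Unset Implicit Arguments.

Theorem corollary7p2 (F : finFieldType) (L : fieldExtType F) (n m : nat)
  (hn : (2 <= n)%N) (hnm : (n <= m)%N)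
  (C : {vspace 'rV[L]_n}) (gam gams : m.-tuple L)
  (hgam : basis_of {:L} gam) (hdual : is_dual_basis gam gams) :
  let GC := GammaCode gam (fun v => v \in C) in
  let GsC := GammaCode gams (fun v => v \in C) in
  let GCd := GammaCode gam (dualCode C) in
  [/\ qpm_eq (Pc GCd) (qpm_dual (Pc GsC)),
      qpm_eq (qpm_dual (Pc GsC)) (qpm_dual (Pc GC)),
      qpm_eq (Pr GCd) (qpm_dual (Pr GsC))
    & qpm_equiv (qpm_dual (Pr GsC)) (qpm_dual (Pr GC))].
Proof.
move=> GC GsC GCd.
have hm0 : m != 0%N by lia.
have hn0 : n != 0%N by lia.
have hm : (0 < m)%N by lia.
pose i0 : 'I_m := Ordinal hm.
have SC0 : (0 : 'rV[L]_n) \in C by exact: mem0v.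
have SCc : forall c (v w : 'rV[L]_n), v \in C -> w \in C -> c%:A *: v + w \in C.
  by move=> c v w hv hw; rewrite memvD // memvZ.
have SD0 : dualCode C 0 by move=> w _; exact: ipL0.
have SDc : forall c (v w : 'rV[L]_n), dualCode C v -> dualCode C w ->
    dualCode C (c%:A *: v + w).
  by move=> c v w hv hw u hu; rewrite ipL_linl hv // hw // mulr0 addr0.
have memGC := mem_GammaCode gam SC0 SCc.
have memGsC := mem_GammaCode gams SC0 SCc.
have memGCd := mem_GammaCode gam SD0 SDc.
have eD : GCd = perpv GsC.
  apply/vspaceP=> M; apply/idP/idP.
    move/memGCd=> [v hv <-]; apply/mem_perpv => N /memGsC [w hw <-].
    by rewrite fm_Gamma // hv // fTr0.
  move/mem_perpv=> hM; have [v hv] := Gamma_surj hgam M.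
  apply/memGCd; exists v => // w hw; apply/eqP; apply/negPn/negP => hx.
  pose a := (ipL v w)^-1 * (gam`_i0 * gams`_i0).
  have hw' : a *: w \in C by rewrite memvZ.
  have := hM (GammaV gams (a *: w)).
  have ex : (ipL v w)^-1 * (gam`_i0 * gams`_i0) * ipL v w = gam`_i0 * gams`_i0.
    by rewrite mulrC mulrA mulfV // mul1r.
  rewrite -hv fm_Gamma // ipL_Zr /a ex hdual' // eqxx.
  move=> h; have h1 : (true%:R : F) = 0 by apply: h; apply/memGsC; exists (a *: w).
  by have := oner_neq0 F; rewrite -[1]/(true%:R) h1 eqxx.
have eS : GsC = (linfun (mulmxr (Bmx gam gams) : 'M[F]_(n, m) -> _) @: GC)%VS.
  apply/vspaceP=> M; apply/idP/idP.
    move/memGsC=> [w hw <-]; apply/memv_imgP; exists (GammaV gam w).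
      by apply/memGC; exists w.
    by rewrite lfunE /= (Gammas_B gams hgam).
  move/memv_imgP=> [N /memGC [w hw <-] ->]; apply/memGsC; exists w => //.
  by rewrite lfunE /= (Gammas_B gams hgam).
have hB := Bmx_unit hgam hdual.
split.
- by move=> A; rewrite /Pc eD; apply: rho_c_dual.
- by move=> A; rewrite /qpm_dual /Pc eS !rho_c_mulB.
- by move=> A; rewrite /Pr eD; apply: rho_r_dual.
exists (invmx (Bmx gam gams)); split; first by rewrite unitmx_inv.
move=> A; rewrite /qpm_dual /Pr eS !rho_r1 dim_inj_img ?lker_mulB //.
rewrite rho_r_mulB // mxrankMfree // row_free_unit unitmx_inv //.
Qed.
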